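(* Let $G$ be a graph of order $n$ with a clique partition $F=\{C_1,\dots,C_k\}$ with $k>n$, where $s_i^F=|C_i|$ ordered $s_1^F\ge\cdots\ge s_k^F$, and let $P_G$ be the clique partition graph of $G$ with respect to $F$, with adjacency eigenvalues $\lambda_1(P_G)\ge\cdots\ge\lambda_k(P_G)$. Then (i) $-s_1^F\le\lambda_i(P_G)\le -s_k^F$ for $n+1\le i\le k$; (ii) $\nu^-(P_G)\ge k-n$, where $\nu^-(P_G)$ is the number of negative adjacency eigenvalues of $P_G$.
   Context: All graphs are finite and simple. A clique partition of $G$ is a set $F$ of cliques (sets of pairwise adjacent vertices) such that every edge lies in exactly one clique of $F$. The clique partition graph $P_G$ has vertex set $\{1,\dots,k\}$ (vertex $i$ corresponding to $C_i$), with $i\ne j$ adjacent iff $C_i\cap C_j\neq\emptyset$. *)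

(* Defs.v *)
From HB Require Import structures.
From mathcomp Require Import all_boot all_order all_algebra.
From mathcomp Require Import reals.
Set Implicit Arguments. Unset Strict Implicit. Unset Printing Implicit Defensive.
Import Order.TTheory GRing.Theory Num.Theory.
Local Open Scope ring_scope.

Definition simple_graph (T : finType) (e : rel T) : Prop :=
  symmetric e /\ irreflexive e.

Definition is_clique (T : finType) (e : rel T) (C : {set T}) : Prop :=
  C != set0 /\ {in C &, forall x y, x != y -> e x y}.

Definition is_clique_partition (T : finType) (e : rel T) (F : seq {set T}) : Prop :=
  [/\ uniq F, (forall C, C \in F -> is_clique e C)
    & forall x y, e x y -> count (fun C : {set T} => (x \in C) && (y \in C)) F = 1%N].

(* Adjacency matrix of the clique partition graph P_G w.r.t. F:
   i ~ j iff i <> j and C_i, C_j intersect. *)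
Definition cp_adj (R : nzRingType) (T : finType) (F : seq {set T}) :
  'M[R]_(size F) :=
  \matrix_(i < size F, j < size F)
    ((i != j) && (nth set0 F i :&: nth set0 F j != set0))%:R.

(* Main.v *)
Require Import Defs.
From HB Require Import structures.
From mathcomp Require Import all_boot all_order all_algebra.
From mathcomp Require Import reals.
From mathcomp Require Import sesquilinear spectral zify.
From mathcomp.real_closed Require Import complex.
Import Order.TTheory GRing.Theory Num.Theory.
Set Implicit Arguments. Unset Strict Implicit. Unset Printing Implicit Defensive.
Local Open Scope ring_scope.
Local Open Scope sesquilinear_scope.

Lemma count_enum_card (T : finType) (p : pred T) : count p (enum T) = #|p|.
Proof. by rewrite cardE -size_filter enumT -deprecated_filter_index_enum. Qed.

Section Gen.
Variable C : numClosedFieldType.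

Definition qf k (w : 'rV[C]_k) (M : 'M[C]_k) : C := (w *m M *m w ^t* ) 0 0.

Lemma qf_diag k (w v : 'rV[C]_k) :
  qf w (diag_mx v) = \sum_j v 0 j * (w 0 j * (w 0 j)^* ).
Proof.
rewrite /qf mul_mx_diag mxE; apply: eq_bigr => j _; rewrite !mxE.
by rewrite mulrAC mulrC.
Qed.

Lemma qf1 k (w : 'rV[C]_k) : qf w 1%:M = \sum_j w 0 j * (w 0 j)^*.
Proof. by rewrite /qf mulmx1 mxE; apply: eq_bigr => j _; rewrite !mxE. Qed.

Lemma qf_mulmx k m (w : 'rV[C]_k) (N : 'M[C]_(k, m)) :
  qf w (N *m N ^t* ) = \sum_x (w *m N) 0 x * ((w *m N) 0 x)^*.
Proof.
rewrite /qf mulmxA -mulmxA -map_mxM -trmx_mul mxE.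
by apply: eq_bigr => j _; rewrite !mxE.
Qed.

Lemma qfD k (w : 'rV[C]_k) M1 M2 : qf w (M1 + M2) = qf w M1 + qf w M2.
Proof. by rewrite /qf mulmxDr mulmxDl mxE. Qed.

Lemma qf_unitary k (P : 'M[C]_k) (a : 'rV_k) M :
  P \is unitarymx -> qf (a *m P) (P ^t* *m M *m P) = qf a M.
Proof. by move=> Pu; rewrite /qf trmx_mul map_mxM !mulmxA !mulmxtVK. Qed.

Lemma qf_NN_ge0 k m (w : 'rV[C]_k) (N : 'M[C]_(k, m)) : 0 <= qf w (N *m N ^t* ).
Proof. by rewrite qf_mulmx; apply: sumr_ge0 => x _; exact: mul_conjC_ge0. Qed.

Section Spec.
Variables (k m : nat) (A : 'M[C]_k) (N : 'M[C]_(k, m)) (sv : 'rV[C]_k).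
Hypothesis hA : A + diag_mx sv = N *m N ^t*.
Variables (P : 'M[C]_k) (d : 'rV[C]_k).
Hypothesis Pu : P \is unitarymx.
Hypothesis Aeq : A = P ^t* *m diag_mx d *m P.

Lemma qfA (a : 'rV[C]_k) : qf (a *m P) A = \sum_j d 0 j * (a 0 j * (a 0 j)^* ).
Proof. by rewrite Aeq qf_unitary // qf_diag. Qed.

Lemma qf1P (a : 'rV[C]_k) : \sum_j (a *m P) 0 j * ((a *m P) 0 j)^* = \sum_j a 0 j * (a 0 j)^*.
Proof.
rewrite -!qf1 -(qf_unitary a 1%:M Pu) mulmx1; congr qf.
have := Pu; rewrite -trmxC_unitary => /unitarymxP.
by rewrite trmxCK.
Qed.

Lemma spec_lower i smax : (forall j, sv 0 j <= smax) -> - smax <= d 0 i.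
Proof.
move=> hs.
pose a : 'rV[C]_k := delta_mx 0 i.
pose w := a *m P.
have e1 : qf w A + qf w (diag_mx sv) = qf w (N *m N ^t* ) by rewrite -qfD hA.
have hsum : \sum_j a 0 j * (a 0 j)^* = 1.
  rewrite (bigD1 i) //= big1 => [|j ji]; rewrite !mxE ?eqxx /=.
    by rewrite mulr1n conjC1 mulr1 addr0.
  by rewrite (negbTE ji) mul0r.
have hA' : qf w A = d 0 i.
  rewrite qfA (bigD1 i) //= big1 => [|j ji]; rewrite !mxE ?eqxx /=.
    by rewrite mulr1n conjC1 !mulr1 addr0.
  by rewrite (negbTE ji) mul0r mulr0.
have hD : qf w (diag_mx sv) <= smax.
  rewrite qf_diag; apply: (@le_trans _ _ (\sum_j smax * (w 0 j * (w 0 j)^* ))).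
    by apply: ler_sum => j _; apply: ler_wpM2r => //; exact: mul_conjC_ge0.
  by rewrite -mulr_sumr /w qf1P hsum mulr1.
have := qf_NN_ge0 w N; rewrite -e1 hA' => h.
apply: (@le_trans _ _ (- qf w (diag_mx sv))); first by rewrite lerN2.
by rewrite -subr_ge0 opprK.
Qed.

Lemma spec_upper smin : (forall j, smin <= sv 0 j) ->
  (count (fun i => (- smin < d 0 i)%R) (enum 'I_k) <= m)%N.
Proof.
move=> hs.
set J := [set i | - smin < d 0 i].
have -> : count (fun i => - smin < d 0 i) (enum 'I_k) = #|J|.
  by rewrite count_enum_card; apply: eq_card => x; rewrite inE.
rewrite leqNgt; apply/negP => HJ.
pose E : 'M[C]_(#|J|, k) := \matrix_(r, j) (j == enum_val r)%:R.
have EE : E *m E^T = 1%:M.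
  apply/matrixP => r r'; rewrite !mxE.
  rewrite (bigD1 (enum_val r)) //= big1 => [|j jr]; rewrite !mxE ?eqxx.
    by rewrite mul1r addr0 (inj_eq enum_val_inj) eq_sym.
  by rewrite (negbTE jr) mul0r.
have rE : \rank E = #|J|.
  apply/eqP; rewrite eqn_leq rank_leq_row /=.
  by rewrite -{1}(mxrank1 C #|J|) -EE mxrankM_maxl.
set K := kermx (P *m N).
have rK : (k - m <= \rank K)%N.
  rewrite mxrank_ker leq_sub2l //.
  exact: leq_trans (mxrankM_maxr _ _) (rank_leq_col N).
have hcap := mxrank_sum_cap E K.
have rsum : (\rank (E + K)%MS <= k)%N := rank_leq_col _.
have Jk : (#|J| <= k)%N by apply: leq_trans (max_card _) _; rewrite card_ord.
have : (E :&: K)%MS != 0.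
  rewrite -mxrank_eq0 -lt0n; move: hcap; rewrite rE.
  move: rK rsum Jk HJ; clear; lia.
move=> nz.
set a := nz_row (E :&: K)%MS.
have a_nz : a != 0 by rewrite nz_row_eq0.
have aE : (a <= E)%MS := submx_trans (nz_row_sub _) (capmxSl _ _).
have aK : (a <= K)%MS := submx_trans (nz_row_sub _) (capmxSr _ _).
have aPN : a *m (P *m N) = 0 by apply/sub_kermxP.
have supp : forall j, j \notin J -> a 0 j = 0.
  move=> j jJ; have /submxP [x xe] := aE; rewrite xe !mxE big1 // => r _; rewrite !mxE.
  have := enum_valP r; case: (eqVneq j (enum_val r)) => [<- | _ _].
    by rewrite (negbTE jJ).
  by rewrite mulr0.
pose w := a *m P.
have e1 : qf w A + qf w (diag_mx sv) = qf w (N *m N ^t* ) by rewrite -qfD hA.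
have e0 : qf w (N *m N ^t* ) = 0.
  rewrite qf_mulmx; have -> : w *m N = 0 by rewrite /w -mulmxA aPN.
  by apply: big1 => x _; rewrite !mxE mul0r.
have hD : smin * \sum_j (a 0 j * (a 0 j)^* ) <= qf w (diag_mx sv).
  rewrite -qf1P qf_diag mulr_sumr; apply: ler_sum => j _.
  by apply: ler_wpM2r => //; exact: mul_conjC_ge0.
have [j0 j0nz] : exists j, a 0 j != 0.
  apply/existsP; apply: contraR a_nz => /existsPn h; apply/eqP/rowP => j.
  by rewrite mxE; move: (h j); rewrite negbK => /eqP.
have j0J : j0 \in J by apply: contraR j0nz => /supp ->; rewrite eqxx.
have pos : 0 < \sum_j (d 0 j + smin) * (a 0 j * (a 0 j)^* ).
  rewrite (bigD1 j0) //=; apply: (@lt_le_trans _ _ ((d 0 j0 + smin) * (a 0 j0 * (a 0 j0)^* ))).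
    apply: mulr_gt0; last by rewrite mul_conjC_gt0.
    by move: j0J; rewrite inE -subr_gt0 opprK.
  rewrite lerDl; apply: sumr_ge0 => j _.
  case: (boolP (j \in J)) => [jJ|/supp ->]; last by rewrite mul0r mulr0.
  apply: mulr_ge0; last exact: mul_conjC_ge0.
  by apply: ltW; move: jJ; rewrite inE -subr_gt0 opprK.
have : \sum_j (d 0 j + smin) * (a 0 j * (a 0 j)^* ) <= 0.
  rewrite (eq_bigr (fun j => d 0 j * (a 0 j * (a 0 j)^* ) + smin * (a 0 j * (a 0 j)^* ))); last first.
    by move=> j _; rewrite mulrDl.
  rewrite big_split /= -mulr_sumr -qfA.
  apply: (@le_trans _ _ (qf w A + qf w (diag_mx sv))); first by rewrite lerD2l.
  by rewrite e1 e0.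
by move=> h; have := lt_le_trans pos h; rewrite ltxx.
Qed.

End Spec.
End Gen.

Lemma herm_normal (C : numClosedFieldType) k m (A : 'M[C]_k) (N : 'M[C]_(k, m))
  (sv : 'rV[C]_k) : (forall j, (sv 0 j)^* = sv 0 j) ->
  A + diag_mx sv = N *m N ^t* -> A \is normalmx.
Proof.
move=> hsv hA.
have hA' : A = N *m N ^t* - diag_mx sv by rewrite -hA addrK.
have hh : A ^t* = A.
  rewrite {1}hA' linearB /= map_mxB trmx_mul map_mxM trmxCK tr_diag_mx map_diag_mx.
  rewrite [RHS]hA'; congr (_ - diag_mx _); apply/rowP => j; rewrite mxE; exact: hsv.
by apply/normalmxP; rewrite hh.
Qed.

Lemma char_poly_conj (R : comUnitRingType) k (P B : 'M[R]_k) :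
  P \in unitmx -> char_poly (invmx P *m B *m P) = char_poly B.
Proof.
move=> Pu; rewrite /char_poly /char_poly_mx.
have -> : 'X%:M - map_mx polyC (invmx P *m B *m P) =
   map_mx polyC (invmx P) *m ('X%:M - map_mx polyC B) *m map_mx polyC P.
  rewrite mulmxBr mulmxBl !map_mxM; congr (_ - _).
  rewrite mul_mx_scalar -scalemxAl -map_mxM mulVmx // map_mx1.
  by rewrite scale_scalar_mx mulr1.
rewrite !det_mulmx mulrAC -det_mulmx -map_mxM mulVmx // map_mx1 det1 mul1r.
by [].
Qed.


Lemma cap_le1 (T : finType) (e : rel T) (F : seq {set T}) (i j : nat) :
  is_clique_partition e F -> (i < size F)%N -> (j < size F)%N -> i != j ->
  (#|nth set0 F i :&: nth set0 F j| <= 1)%N.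
Proof.
case=> uF cl cnt ilt jlt ij; rewrite leqNgt; apply/negP => /card_gt1P [x [y [xi yi xy]]].
move: xi yi; rewrite !inE => /andP [xi xj] /andP [yi yj].
have [_ hcl] := cl _ (mem_nth set0 ilt).
have exy := hcl x y xi yi xy.
have := cnt x y exy.
have neq : nth set0 F i != nth set0 F j by rewrite nth_uniq.
have : (2 <= count (fun C : {set T} => (x \in C) && (y \in C)) F)%N.
  rewrite -size_filter.
  apply: (@leq_trans (size [:: nth set0 F i; nth set0 F j])) => //.
  apply: uniq_leq_size; first by rewrite /= inE neq.
  move=> c; rewrite !inE => /orP [] /eqP ->; rewrite mem_filter ?xi ?yi ?xj ?yj mem_nth //.
by move=> h1 h2; rewrite h2 in h1.
Qed.

Lemma sum_card (C : nzRingType) (T : finType) (X Y : {set T}) :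
  \sum_(x < #|T|) (enum_val x \in X)%:R * (enum_val x \in Y)%:R = (#|X :&: Y|%:R : C).
Proof.
rewrite (eq_bigr (fun x => ((enum_val x \in X :&: Y) : nat)%:R)); last first.
  by move=> x _; rewrite inE -natrM; case: (_ \in X); case: (_ \in Y).
rewrite -natr_sum; congr (_%:R).
rewrite -(big_enum_val (A := T) (fun x => ((x \in X :&: Y) : nat))) /=.
rewrite -sum1_card big_mkcond [RHS]big_mkcond /=; apply: eq_bigr => x _.
by case: (_ \in _).
Qed.

Theorem mainTheorem7 (R : realType) (T : finType) (e : rel T)
    (F : seq {set T}) (lam : seq R) :
  simple_graph e ->
  is_clique_partition e F ->
  (#|T| < size F)%N ->
  sorted geq [seq #|C| | C : {set T} <- F] ->
  sorted (fun x y : R => y <= x) lam ->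
  char_poly (cp_adj R F) = \prod_(x <- lam) ('X - x%:P) ->
  (forall i : nat, (#|T| <= i < size F)%N ->
      - (#|nth set0 F 0|)%:R <= nth 0 lam i /\
      nth 0 lam i <= - (#|nth set0 F (size F).-1|)%:R)
  /\ (size F - #|T| <= count (fun x : R => (x < 0)%R) lam)%N.
Proof.
move=> sg cp nk srt slam Hchar.
set k := size F.
have hsz : size lam = k.
  have := size_char_poly (cp_adj R F); rewrite Hchar size_prod_XsubC.
  by case.
pose C := R[i].
pose AC := cp_adj C F.
have eAC : AC = map_mx (real_complex R) (cp_adj R F).
  by apply/matrixP => i j; rewrite !mxE rmorph_nat.
have hchar : char_poly AC = \prod_(x <- map (real_complex R) lam) ('X - x%:P).
  rewrite eAC -map_char_poly Hchar rmorph_prod big_map.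
  by apply: eq_bigr => x _; exact: map_polyXsubC.
pose N : 'M[C]_(k, #|T|) := \matrix_(i, x) ((enum_val x \in nth set0 F i)%:R).
pose sv : 'rV[C]_k := \row_i (#|nth set0 F i|)%:R.
have hsv : forall j, (sv 0 j)^* = sv 0 j by move=> j; rewrite mxE conjC_nat.
have hA : AC + diag_mx sv = N *m N ^t*.
  apply/matrixP => i j; rewrite !mxE.
  rewrite (eq_bigr (fun x => (enum_val x \in nth set0 F i)%:R * (enum_val x \in nth set0 F j)%:R)); last first.
    by move=> x _; rewrite !mxE conjC_nat.
  rewrite sum_card.
  case: (eqVneq i j) => [<-|ij]; first by rewrite setIid /= add0r mulr1n.
  rewrite /= addr0.
  have := cap_le1 cp (ltn_ord i) (ltn_ord j) ij.
  case: (ltngtP #|nth set0 F i :&: nth set0 F j| 1) => // [h|h] _.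
    move: h; rewrite ltnS leqn0 => /eqP h; rewrite h; move/cards0_eq: h => ->.
    by rewrite eqxx.
  by rewrite h -card_gt0 h.
pose P := spectralmx AC.
pose d := spectral_diag AC.
have Pu : P \is unitarymx := spectral_unitarymx AC.
have Aeq0 : AC = invmx P *m diag_mx d *m P.
  exact/orthomx_spectralP/(herm_normal hsv hA).
have Aeq : AC = P ^t* *m diag_mx d *m P by rewrite {1}Aeq0 invmx_unitary.
have hchar2 : char_poly AC = \prod_(x <- [seq d 0 i | i <- enum 'I_k]) ('X - x%:P).
  rewrite {1}Aeq0 char_poly_conj ?spectral_unit // char_poly_trig ?diag_mx_is_trig //.
  rewrite big_map big_enum /=; apply: eq_bigr => i _; by rewrite mxE eqxx mulr1n.
have hperm : perm_eq (map (real_complex R) lam) [seq d 0 i | i <- enum 'I_k].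
  by apply: prod_XsubC_eq; rewrite -hchar -hchar2.
set s1 := #|nth set0 F 0|.
set sk := #|nth set0 F k.-1|.
have k0 : (0 < k)%N by apply: leq_ltn_trans nk.
have hsrt : forall j, (j < k)%N -> (sk <= #|nth set0 F j| <= s1)%N.
  move=> j jk.
  have h := sorted_leq_nth (leT := geq) (fun a b c h1 h2 => leq_trans h2 h1) leqnn 0 srt.
  have sz : size [seq #|C| | C : {set T} <- F] = k by rewrite size_map.
  have nm : forall l, (l < k)%N -> nth 0%N [seq #|C| | C : {set T} <- F] l = #|nth set0 F l|.
    by move=> l lk; rewrite (nth_map set0).
  apply/andP; split.
    have := h j k.-1; rewrite !inE sz !nm //; last by rewrite prednK.
    by apply => //; [rewrite prednK | rewrite -ltnS prednK].
  by have := h 0%N j; rewrite !inE sz !nm //; apply.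
have hlow : forall i, - (s1%:R : C) <= d 0 i.
  move=> i; apply: (spec_lower hA Pu Aeq) => j.
  by rewrite mxE ler_nat; case/andP: (hsrt j (ltn_ord j)).
have hup : (count (fun i => (- (sk%:R : C) < d 0 i)%R) (enum 'I_k) <= #|T|)%N.
  apply: (spec_upper hA Pu Aeq) => j.
  by rewrite mxE ler_nat; case/andP: (hsrt j (ltn_ord j)).
pose p := (fun x : R => (- (sk%:R) < x)%R).
have hcnt : (count p lam <= #|T|)%N.
  have -> : count p lam =
      count (fun z : C => (- (sk%:R) < z)%R) (map (real_complex R) lam).
    rewrite count_map; apply: eq_count => x /=; rewrite /p.
    by rewrite -ltcR rmorphN rmorph_nat.
  by rewrite (permP hperm) count_map.
have hall : forall x, x \in lam -> - (s1%:R) <= x.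
  move=> x xl.
  have : x%:C%C \in [seq d 0 i | i <- enum 'I_k] by rewrite -(perm_mem hperm) map_f.
  case/mapP => i _ hi; have := hlow i; rewrite -hi.
  by rewrite -(rmorph_nat (real_complex R)) -rmorphN lecR.
have sk1 : (1 <= sk)%N.
  have := cp; case=> _ cl _.
  have km : (k.-1 < k)%N by rewrite ltn_predL.
  have [ne _] := cl _ (mem_nth set0 km).
  by rewrite /sk card_gt0.
split.
  move=> i /andP [ni ik]; split.
    by apply: hall; apply: mem_nth; rewrite hsz.
  rewrite leNgt; apply/negP => hi.
  have : (i.+1 <= count p lam)%N.
    rewrite -(cat_take_drop i.+1 lam) count_cat.
    apply: leq_trans (leq_addr _ _).
    have st : size (take i.+1 lam) = i.+1 by rewrite size_takel // hsz.
    suff ee : count p (take i.+1 lam) = size (take i.+1 lam) by rewrite ee st.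
    apply/eqP; rewrite -all_count; apply/(all_nthP 0) => j; rewrite st => jlt.
    rewrite nth_take //; apply: (lt_le_trans hi).
    have h := sorted_leq_nth (leT := fun x y : R => y <= x)
      (fun a b c h1 h2 => le_trans h2 h1) (@lexx _ R) 0 slam.
    by apply: (h j i); rewrite ?inE ?hsz; move: jlt ik; clear; lia.
  move: hcnt ni; clear; lia.
have hneg : (count (predC p) lam <= count (fun x : R => (x < 0)%R) lam)%N.
  apply: sub_count => x /=; rewrite -leNgt => h.
  apply: (le_lt_trans h); rewrite oppr_lt0 ltr0n.
  by apply: leq_trans sk1.
have := count_predC p lam.
move: hneg hcnt; rewrite hsz; clear; lia.
Qed.
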